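(* Let $X=Y\cup Z$ where $Y\cap Z=\emptyset$, $Z$ is a $\sigma$-compact subspace of $X$ and $Y$ is a closed discrete subset of $X$. If $X$ is absolutely strongly star-Lindelöf and $|Y|<\mathfrak{b}$, then $X$ is selectively strongly star-Hurewicz.
   Context: All spaces are regular. $St(A,\mathcal{U})=\bigcup\{U\in\mathcal{U}:U\cap A\neq\emptyset\}$. $\mathfrak{b}$ is the bounding number. $X$ is absolutely strongly star-Lindelöf if for every open cover $\mathcal{U}$ and every dense $D\subseteq X$ there is a countable $C\subseteq D$ with $St(C,\mathcal{U})=X$. $X$ is selectively strongly star-Hurewicz if for every sequence $(\mathcal{U}_n)$ of open covers and every sequence $(D_n)$ of dense subsets there are finite $F_n\subseteq D_n$ such that every $x\in X$ lies in $St(F_n,\mathcal{U}_n)$ for all but finitely many $n$. *)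

(* Defs.v *)
From mathcomp Require Import all_boot all_order.
From mathcomp Require Import all_classical all_reals all_analysis.
Set Implicit Arguments. Unset Strict Implicit. Unset Printing Implicit Defensive.
Local Open Scope classical_set_scope.

Definition St (T : Type) (A : set T) (U : set (set T)) : set T :=
  \bigcup_(V in [set V | U V /\ V `&` A !=set0]) V.

Definition open_cover (T : topologicalType) (U : set (set T)) : Prop :=
  (forall V, U V -> open V) /\ \bigcup_(V in U) V = setT.

Definition sigma_compact (T : topologicalType) (Z : set T) : Prop :=
  exists K : nat -> set T, (forall n, compact (K n)) /\ Z = \bigcup_n K n.

Definition closed_discrete (T : topologicalType) (Y : set T) : Prop :=
  closed Y /\ forall y, Y y -> exists V : set T, open V /\ V y /\ V `&` Y = [set y].

Definition le_star (f g : nat -> nat) : Prop :=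
  exists N, forall n, (N <= n)%N -> (f n <= g n)%N.

Definition bounded_family (F : set (nat -> nat)) : Prop :=
  exists g : nat -> nat, forall f, F f -> le_star f g.

(* |Y| < b, where b = min{|F| : F subset of omega^omega unbounded for <=*}:
   equivalently no unbounded family has cardinality <= |Y|. *)
Definition card_lt_bounding (T : Type) (Y : set T) : Prop :=
  forall F : set (nat -> nat), (F #<= Y)%card -> bounded_family F.

Definition absolutely_strongly_star_Lindelof (T : topologicalType) : Prop :=
  forall (U : set (set T)) (D : set T), open_cover U -> dense D ->
    exists C : set T, C `<=` D /\ countable C /\ St C U = setT.

Definition selectively_strongly_star_Hurewicz (T : topologicalType) : Prop :=
  forall (U : nat -> set (set T)) (D : nat -> set T),
    (forall n, open_cover (U n)) -> (forall n, dense (D n)) ->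
    exists F : nat -> set T,
      (forall n, F n `<=` D n /\ finite_set (F n)) /\
      forall x : T, exists N, forall n, (N <= n)%N -> St (F n) (U n) x.

(* Main.v *)
Require Import Defs.
From HB Require Import structures.
From mathcomp Require Import finmap.
From mathcomp Require Import all_boot all_order.
From mathcomp Require Import all_classical all_reals all_analysis.
Local Open Scope classical_set_scope.

Definition pt (T : topologicalType) (x : T) : Type := T.
HB.instance Definition _ (T : topologicalType) (x : T) := Topological.copy (@pt T x) T.
HB.instance Definition _ (T : topologicalType) (x : T) := isPointed.Build (@pt T x) x.
Lemma cc (T : topologicalType) (x : T) (K : set T) : compact K -> cover_compact (K : set (@pt T x)).
Proof. move=> cK; have : @compact (@pt T x) K := cK. by rewrite compact_cover. Qed.

Lemma compact_star (T : topologicalType) (K : set T) (U : set (set T)) (D : set T) :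
  compact K -> open_cover U -> dense D ->
  exists F, F `<=` D /\ finite_set F /\ K `<=` St F U.
Proof.
move=> cK [oU cU] dD.
have hV : forall x : T, exists V, U V /\ V x.
  move=> x; have : (\bigcup_(V in U) V) x by rewrite cU.
  by case=> V UV Vx; exists V.
have [V HV] := choice hV.
have hd : forall x : T, exists y, D y /\ V x y.
  move=> x; have [y [Vy Dy]] := dD (V x) (ex_intro _ x (HV x).2) (oU _ (HV x).1).
  by exists y.
have [d Hd] := choice hd.
have [[x0 _]|nT] := pselect (exists x : T, True); last first.
  exists set0; split => //; split => // x; exfalso; exact: nT (ex_intro _ x I).
have [D' sD' KD'] := @cc T x0 K cK T K V (fun i _ => oU _ (HV i).1) (fun x Kx => ex_intro2 _ _ x Kx (HV x).2).
exists (d @` [set` D']); split; first by move=> _ [i _ <-]; exact: (Hd i).1.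
split; first exact/finite_image/finite_fset.
move=> x Kx; have [i D'i Vix] := KD' x Kx.
exists (V i) => //; split; first exact: (HV i).1.
by exists (d i); split; [exact: (Hd i).2 | exists i].
Qed.

Lemma St_mono (T : Type) (A B : set T) (U : set (set T)) :
  A `<=` B -> St A U `<=` St B U.
Proof.
move=> AB x [V [UV [a [Va Aa]]] Vx]; exists V => //; split => //.
by exists a; split => //; exact: AB.
Qed.

Fixpoint accum (T : Type) (K : nat -> set T) (n : nat) : set T :=
  if n is n'.+1 then accum T K n' `|` K n else K 0%N.
Arguments accum {T}.

Lemma accum_compact (T : topologicalType) (K : nat -> set T) :
  (forall n, compact (K n)) -> forall n, compact (accum K n).
Proof. by move=> cK; elim=> [|n IH] //=; exact: compactU. Qed.

Lemma accum_sub (T : Type) (K : nat -> set T) m n :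
  (m <= n)%N -> K m `<=` accum K n.
Proof.
elim: n => [|n IH]; first by rewrite leqn0 => /eqP ->.
rewrite leq_eqVlt => /orP [/eqP -> x Kx|]; first by right.
by rewrite ltnS => /IH H x Kx; left; exact: H.
Qed.

Theorem mainTheorem7 (T : topologicalType) (Y Z : set T) :
  regular_space T ->
  Y `|` Z = setT -> Y `&` Z = set0 ->
  sigma_compact Z -> closed_discrete Y ->
  absolutely_strongly_star_Lindelof T -> card_lt_bounding Y ->
  selectively_strongly_star_Hurewicz T.
Proof.
move=> _ YZ _ [K [cK eZ]] _ assl bnd U D oU dD.
have hZ : forall n, exists F, F `<=` D n /\ finite_set F /\ accum K n `<=` St F (U n).
  by move=> n; apply: compact_star => //; exact: accum_compact.
have [FZ HFZ] := choice hZ.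
have hC : forall n, exists C, C `<=` D n /\ countable C /\ St C (U n) = setT.
  by move=> n; apply: assl.
have [C HC] := choice hC.
have hcode : forall n, exists f : T -> nat, {in C n &, injective f}.
  by move=> n; apply/countable_injP; exact: (HC n).2.1.
have [code Hcode] := choice hcode.
have hh : forall y : T, exists f : nat -> nat, forall n, exists c, C n c /\ code n c = f n /\
    exists V, U n V /\ V c /\ V y.
  move=> y.
  have hn : forall n, exists k, exists c, C n c /\ code n c = k /\ exists V, U n V /\ V c /\ V y.
    move=> n; have : St (C n) (U n) y by rewrite (HC n).2.2.
    case=> V [UV [c [Vc Cc]]] Vy.
    by exists (code n c), c; split => //; split => //; exists V.
  by have [f Hf] := choice hn; exists f.
have [h Hh] := choice hh.
have [g Hg] := bnd (h @` Y) (card_image_le h Y).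
exists (fun n => FZ n `|` [set c | C n c /\ (code n c <= g n)%N]); split.
  move=> n; split.
    move=> x [|[]]; [exact: (HFZ n).1 | move=> Cx _; exact: (HC n).1].
  rewrite finite_setU; split; first exact: (HFZ n).2.1.
  set A := [set c | C n c /\ (code n c <= g n)%N].
  have injA : {in A &, injective (code n)}.
    move=> a b; rewrite !inE => Aa Ab; apply: Hcode; rewrite inE; [exact: Aa.1|exact: Ab.1].
  apply: (card_le_finite (B := code n @` A)).
    by have /card_esym/card_eqPle[] := inj_card_eq injA.
  apply: (sub_finite_set (B := `I_(g n).+1)); last exact: finite_II.
  by move=> _ [a [_ ca] <-]; rewrite /= ltnS.
move=> x; have : (Y `|` Z) x by rewrite YZ.
case=> [Yx|Zx].
  have [N HN] := Hg (h x) (ex_intro2 _ _ x Yx erefl).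
  exists N => n /HN hle.
  have [c [Cc [cc [V [UV [Vc Vx]]]]]] := Hh x n.
  exists V => //; split => //; exists c; split => //; right; split => //.
  by rewrite cc.
move: Zx; rewrite eZ => -[m _ Kmx].
exists m => n mn; apply: (@St_mono _ (FZ n)); first by move=> ? ?; left.
have := (HFZ n).2.2 x; apply.
move: Kmx; exact: (@accum_sub _ K m n mn x).
Qed.
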